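(* Let $\epsilon=\epsilon_1\cdots\epsilon_n$ be an inversion sequence to which Algorithm A (described below) is applied, and let $\epsilon'=\epsilon'_1\cdots\epsilon'_n$ be the resulting sequence. If the entry in position $i$ is replaced during the algorithm (i.e. an assignment to $\mathrm{seq}[i]$ is made), then (i) $\epsilon_i<\epsilon_{i+1}$, and (ii) the replacement entry satisfies $\epsilon'_i<\epsilon_{i+1}$.
   Context: An inversion sequence of length $n$ is an integer sequence with $0\le\epsilon_i<i$ for all $i$. The reduction of an integer word replaces each occurrence of its $k$-th smallest distinct value by $k-1$; a consecutive pattern $\underline{p_1p_2p_3p_4}$ occurs in a sequence at position $i$ if the reduction of its entries in positions $i,\dots,i+3$ equals $p_1p_2p_3p_4$. Let $p=\underline{0102}$ and $q=\underline{0112}$. Algorithm A, on input an integer sequence $\mathrm{seq}=\epsilon_1\cdots\epsilon_n$: let $E_p$, $E_q$ be the sets of positions of occurrences of $p$, resp. $q$, in the input sequence; set $\mathrm{last}:=$ null. For $i=1,2,\dots,n$ in order: let $N_p,N_q$ be the sets of positions of occurrences of $p$, resp. $q$, in the current sequence. If $i-2\in E_p$: set $\mathrm{last}:=\mathrm{seq}[i]$ and $\mathrm{seq}[i]:=\mathrm{seq}[i-1]$. Else if $i-2\in E_q$: set $\mathrm{last}:=\mathrm{seq}[i]$ and $\mathrm{seq}[i]:=\mathrm{seq}[i-2]$. Else if $i-2\in N_p$ or $i-2\in N_q$: swap the values of $\mathrm{seq}[i]$ and $\mathrm{last}$. Output $\mathrm{seq}$. *)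

(* Defs.v *)
From mathcomp Require Import all_boot.
Set Implicit Arguments. Unset Strict Implicit. Unset Printing Implicit Defensive.

(* Positions are 1-indexed as in the paper: entry s i = epsilon_i. *)
Definition entry (s : seq nat) (i : nat) : nat := nth 0 s i.-1.

Definition inversion_seq (s : seq nat) : Prop :=
  forall i, 1 <= i <= size s -> entry s i < i.

Definition reduction (w : seq nat) : seq nat :=
  map (fun x => index x (sort leq (undup w))) w.

Definition occurs_at (pat s : seq nat) (j : nat) : bool :=
  [&& 1 <= j, j + 3 <= size s & reduction (take 4 (drop j.-1 s)) == pat].

Definition pat_p : seq nat := [:: 0; 1; 0; 2].
Definition pat_q : seq nat := [:: 0; 1; 1; 2].

(* State of Algorithm A: current sequence, the variable [last]
   (None = null), and the list of positions to which an assignment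
   seq[i] := ... has been made. *)
Definition stateA := (seq nat * option nat * seq nat)%type.

(* Iteration i of Algorithm A; [e] is the input sequence (used for E_p, E_q).
   N_p, N_q are the occurrence sets of the current sequence s.
   The swap branch with last = null is never reached;
   by convention it does nothing. *)
Definition stepA (e : seq nat) (st : stateA) (i : nat) : stateA :=
  let: (s, l, A) := st in
  if (2 < i) && occurs_at pat_p e (i - 2) then
    (set_nth 0 s i.-1 (entry s (i - 1)), Some (entry s i), i :: A)
  else if (2 < i) && occurs_at pat_q e (i - 2) then
    (set_nth 0 s i.-1 (entry s (i - 2)), Some (entry s i), i :: A)
  else if (2 < i) && (occurs_at pat_p s (i - 2) || occurs_at pat_q s (i - 2)) then
    match l with
    | Some v => (set_nth 0 s i.-1 v, Some (entry s i), i :: A)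
    | None => st
    end
  else st.

Definition algA_run (e : seq nat) : stateA :=
  foldl (stepA e) (e, None, [::]) (iota 1 (size e)).

Definition algA (e : seq nat) : seq nat := (algA_run e).1.1.

Definition algA_assigned (e : seq nat) : seq nat := (algA_run e).2.

(* Main.v *)
Require Import Defs.
From mathcomp Require Import all_boot zify.
Set Implicit Arguments. Unset Strict Implicit.

Lemma red_lt (w : seq nat) x y : x \in w -> y \in w ->
  (index x (sort leq (undup w)) < index y (sort leq (undup w))) = (x < y).
Proof.
set r := sort leq (undup w) => xw yw.
have sr : sorted ltn r.
  by rewrite ltn_sorted_uniq_leq sort_uniq undup_uniq (sort_sorted leq_total).
have xr : x \in r by rewrite mem_sort mem_undup.
have yr : y \in r by rewrite mem_sort mem_undup.
have key : forall a b, a \in r -> b \in r -> index a r < index b r -> a < b.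
  move=> a b ar br lt.
  rewrite -[a](nth_index 0 ar) -[b](nth_index 0 br).
  by apply: (sorted_ltn_nth ltn_trans) => //; rewrite inE index_mem.
apply/idP/idP; first exact: key.
move=> lxy; case: (ltngtP (index x r) (index y r)) => // h.
- have := key _ _ yr xr h; lia.
- have : x = y by rewrite -(nth_index 0 xr) h nth_index.
  lia.
Qed.

Lemma red_eq (w : seq nat) x y : x \in w -> y \in w ->
  index x (sort leq (undup w)) = index y (sort leq (undup w)) -> x = y.
Proof.
move=> xw yw h.
have xr : x \in sort leq (undup w) by rewrite mem_sort mem_undup.
by rewrite -(nth_index 0 xr) h nth_index // mem_sort mem_undup.
Qed.

Lemma window s j : 0 < j -> j + 3 <= size s ->
  take 4 (drop j.-1 s) = [:: entry s j; entry s j.+1; entry s j.+2; entry s j.+3].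
Proof.
case: j => // j _ H; rewrite /entry /=.
rewrite (drop_nth 0) ?(drop_nth 0 (n:=j.+1)) ?(drop_nth 0 (n:=j.+2))
  ?(drop_nth 0 (n:=j.+3)) //; try lia; by rewrite /= take0.
Qed.

Lemma occ_p s j : occurs_at pat_p s j ->
  [/\ 0 < j, j + 3 <= size s, entry s j = entry s j.+2,
      entry s j < entry s j.+1 & entry s j.+1 < entry s j.+3].
Proof.
case/and3P => j0 js; rewrite window // /reduction.
set w := [:: _; _; _; _].
have m0 : entry s j \in w by rewrite !inE eqxx.
have m1 : entry s j.+1 \in w by rewrite !inE eqxx !orbT.
have m2 : entry s j.+2 \in w by rewrite !inE eqxx !orbT.
have m3 : entry s j.+3 \in w by rewrite !inE eqxx !orbT.
move: m0 m1 m2 m3; set r := sort leq (undup w) => m0 m1 m2 m3.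
rewrite {1}/w /= => /eqP [h0 h1 h2 h3].
split => //.
- exact: (red_eq m0 m2 (etrans h0 (esym h2))).
- by rewrite -(red_lt m0 m1) h0 h1.
- by rewrite -(red_lt m1 m3) h1 h3.
Qed.

Lemma occ_q s j : occurs_at pat_q s j ->
  [/\ 0 < j, j + 3 <= size s, entry s j.+1 = entry s j.+2,
      entry s j < entry s j.+1 & entry s j.+1 < entry s j.+3].
Proof.
case/and3P => j0 js; rewrite window // /reduction.
set w := [:: _; _; _; _].
have m0 : entry s j \in w by rewrite !inE eqxx.
have m1 : entry s j.+1 \in w by rewrite !inE eqxx !orbT.
have m2 : entry s j.+2 \in w by rewrite !inE eqxx !orbT.
have m3 : entry s j.+3 \in w by rewrite !inE eqxx !orbT.
move: m0 m1 m2 m3; set r := sort leq (undup w) => m0 m1 m2 m3.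
rewrite {1}/w /= => /eqP [h0 h1 h2 h3].
split => //.
- exact: (red_eq m1 m2 (etrans h1 (esym h2))).
- by rewrite -(red_lt m0 m1) h0 h1.
- by rewrite -(red_lt m1 m3) h1 h3.
Qed.

Lemma occ_same pat s t j : size s = size t ->
  (forall k, j <= k <= j.+3 -> entry s k = entry t k) ->
  occurs_at pat s j = occurs_at pat t j.
Proof.
move=> hs he; rewrite /occurs_at hs.
case j0: (0 < j) => //=; case js: (j + 3 <= size t) => //=.
rewrite !window ?hs // !he //; lia.
Qed.

Lemma entry_set s i v k : 1 < i ->
  entry (set_nth 0 s i.-1 v) k = if k == i then v else entry s k.
Proof.
move=> i1; rewrite /entry nth_set_nth /=.
case: (k =P i) => [->|ne]; first by rewrite eqxx.
case: eqP => // h; exfalso; apply: ne; lia.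
Qed.

Definition Inv (e : seq nat) (m : nat) (st : stateA) : Prop :=
  let: (s, l, A) := st in
  [/\ size s = size e,
      (forall j, (m < j) || (j \notin A) -> entry s j = entry e j),
      (forall j, j \in A -> [/\ j <= m, entry e j < entry e j.+1 & entry s j < entry e j.+1]) &
      (forall v, l = Some v -> exists k, [/\ k \in A, v = entry e k,
          entry e k < entry e k.+1 & forall j, j \in A -> j <= k])].

Lemma entry_set2 s i v k :
  entry (set_nth 0 s i.+1 v) k = if k == i.+2 then v else entry s k.
Proof. exact: (@entry_set s i.+2 v k). Qed.

Lemma Inv_step e m st : Inv e m st -> Inv e m.+1 (stepA e st m.+1).
Proof.
case: st => [[s l] A] [hsz hun hA hl].
have keep : Inv e m.+1 (s, l, A).
  split => // [j hj|j /hA [? ? ?]]; last by split => //; lia.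
  by apply: hun; case/orP: hj => h; apply/orP; [left; lia | by right].
rewrite /stepA.
case: ifP => [/andP [i2 /occ_p [j0 js ha hb hc]] | np].
  set j := m.+1 - 2 in j0 js ha hb hc.
  have ei : m.+1 = j.+2 by rewrite /j; lia.
  rewrite ei /= in hun hA hl *.
  have sj1 : entry s j.+1 < entry e j.+3.
    case: (boolP (j.+1 \in A)) => inA.
      by case: (hA _ inA) => _ _ h; lia.
    by rewrite hun ?inA ?orbT //; lia.
  split.
  - by rewrite size_set_nth hsz; apply/maxn_idPr; lia.
  - move=> k; rewrite inE negb_or => hk; rewrite entry_set2.
    have -> : (k == j.+2) = false by apply/negbTE; case/orP: hk => [|/andP[]//]; lia.
    by apply: hun; case/orP: hk => [h|/andP [_ ->]]; rewrite ?orbT //; apply/orP; left; lia.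
  - move=> k; rewrite inE entry_set2; case: eqP => [->|nk] /= hk.
      by split => //; lia.
    by case: (hA _ hk) => ? ? ?; split => //; lia.
  - move=> v [<-]; exists j.+2; split => //.
    + by rewrite inE eqxx.
    + by rewrite hun //; apply/orP; left; lia.
    + lia.
    + by move=> k; rewrite inE => /orP [/eqP ->|/hA [] ]//; lia.
case: ifP => [/andP [i2 /occ_q [j0 js ha hb hc]] | nq].
  set j := m.+1 - 2 in j0 js ha hb hc.
  have ei : m.+1 = j.+2 by rewrite /j; lia.
  rewrite ei /= in hun hA hl *; rewrite (_ : j.+2 - 2 = j); last by lia.
  have sj : entry s j < entry e j.+3.
    case: (boolP (j \in A)) => inA.
      by case: (hA _ inA) => _ _ h; lia.
    by rewrite hun ?inA ?orbT //; lia.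
  split.
  - by rewrite size_set_nth hsz; apply/maxn_idPr; lia.
  - move=> k; rewrite inE negb_or => hk; rewrite entry_set2.
    have -> : (k == j.+2) = false by apply/negbTE; case/orP: hk => [|/andP[]//]; lia.
    by apply: hun; case/orP: hk => [h|/andP [_ ->]]; rewrite ?orbT //; apply/orP; left; lia.
  - move=> k; rewrite inE entry_set2; case: eqP => [->|nk] /= hk.
      by split => //; lia.
    by case: (hA _ hk) => ? ? ?; split => //; lia.
  - move=> v [<-]; exists j.+2; split => //.
    + by rewrite inE eqxx.
    + by rewrite hun //; apply/orP; left; lia.
    + lia.
    + by move=> k; rewrite inE => /orP [/eqP ->|/hA [] ]//; lia.
case: ifP => [/andP [i2 hocc] | _]; last exact: keep.
case: l hl keep => [v hl _|]; last by [].
have [k [kA vk ek kmax]] := hl v erefl.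
set j := m.+1 - 2 in hocc.
have ei : m.+1 = j.+2 by rewrite /j; lia.
have [j0 js h02 h13 h23] : [/\ 0 < j, j + 3 <= size s, entry s j < entry s j.+3,
    entry s j.+1 < entry s j.+3 & entry s j.+2 < entry s j.+3].
  by case/orP: hocc => [/occ_p [] | /occ_q []] => *; split => //; lia.
rewrite ei /= in hun hA np nq *.
have e2 : entry s j.+2 = entry e j.+2 by apply: hun; apply/orP; left; lia.
have e3 : entry s j.+3 = entry e j.+3 by apply: hun; apply/orP; left; lia.
have kle : k <= j.+1 by case: (hA _ kA); lia.
have kge : j <= k.
  case: (leqP j k) => // kj; exfalso.
  have nj : j \notin A by apply/negP => /kmax; lia.
  have nj1 : j.+1 \notin A by apply/negP => /kmax; lia.
  have same : forall pat, occurs_at pat s j = occurs_at pat e j.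
    move=> pat; apply: occ_same => // t ht.
    case: (ltnP j.+1 t) => ht2; first by apply: hun; rewrite ht2.
    have [->|->] : t = j \/ t = j.+1 by lia.
      by apply: hun; rewrite nj orbT.
    by apply: hun; rewrite nj1 orbT.
  have i2p : 2 < j.+2 by lia.
  rewrite (_ : j.+2 - 2 = j) in np nq; last by lia.
  rewrite i2p /= in np nq.
  by move: hocc; rewrite !same np nq.
have vlt : v < entry e j.+3.
  case: (k =P j.+1) => [kj|kj].
    by rewrite vk kj; rewrite kj in ek; lia.
  have kj' : k = j by lia.
  have nj1 : j.+1 \notin A by apply/negP => /kmax; lia.
  have e1 : entry s j.+1 = entry e j.+1 by apply: hun; rewrite nj1 orbT.
  by rewrite vk kj'; rewrite kj' in ek; lia.
split.
- by rewrite size_set_nth hsz; apply/maxn_idPr; lia.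
- move=> t; rewrite inE negb_or => ht; rewrite entry_set2.
  have -> : (t == j.+2) = false by apply/negbTE; case/orP: ht => [|/andP[]//]; lia.
  by apply: hun; case/orP: ht => [h|/andP [_ ->]]; rewrite ?orbT //; apply/orP; left; lia.
- move=> t; rewrite inE entry_set2; case: eqP => [->|nt] /= ht.
    by split => //; lia.
  by case: (hA _ ht) => ? ? ?; split => //; lia.
- move=> w [<-]; exists j.+2; split => //.
  + by rewrite inE eqxx.
  + lia.
  + by move=> t; rewrite inE => /orP [/eqP ->|/hA [] ]//; lia.
Qed.

Lemma Inv_run e m : Inv e m (foldl (stepA e) (e, None, [::]) (iota 1 m)).
Proof.
elim: m => [|m IH]; first by split.
rewrite -addn1 iotaD foldl_cat /= add1n; rewrite addn1; exact: Inv_step.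
Qed.

Theorem lemma4 (e : seq nat) :
  inversion_seq e ->
  forall i : nat, i \in algA_assigned e ->
    entry e i < entry e i.+1 /\ entry (algA e) i < entry e i.+1.
Proof.
move=> _ i; rewrite /algA_assigned /algA /algA_run.
case: (foldl _ _ _) (Inv_run e (size e)) => [[s l] A] [_ _ hA _] /= /hA [].
by [].
Qed.
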